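(* There exists a non-empty Zariski open subset $\mathcal{U}$ of $\mathrm{GL}_2(\mathbb{C})^2$ such that for every Fibonacci sequence $(\mathbf{w}_i)_{i\ge0}$ in $\mathrm{GL}_2(\mathbb{C})$ with $(\mathbf{w}_0,\mathbf{w}_1)\in\mathcal{U}$ there exists $N\in\mathrm{GL}_2(\mathbb{C})$ such that the matrix $\mathbf{y}_i$, defined by $\mathbf{y}_i=\mathbf{w}_iN$ if $i$ is even and $\mathbf{y}_i=\mathbf{w}_i\,{}^tN$ if $i$ is odd, is symmetric for every $i\ge0$. Moreover, for any Fibonacci sequence $(\mathbf{w}_i)_{i\ge0}$ in $\mathrm{GL}_2(\mathbb{C})$, any $N\in\mathrm{GL}_2(\mathbb{C})$ such that $\mathbf{w}_0N$, $\mathbf{w}_1\,{}^tN$ and $\mathbf{w}_1\mathbf{w}_0N$ are symmetric has this property. Finally, when $(\mathbf{w}_0,\mathbf{w}_1)\in\mathcal{U}$ and $\mathbf{w}_0,\mathbf{w}_1$ have integer coefficients, such an $N$ may be chosen with integer coefficients.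
   Context: A Fibonacci sequence in a monoid is a sequence $(\mathbf{w}_i)_{i\ge0}$ with $\mathbf{w}_{i+2}=\mathbf{w}_{i+1}\mathbf{w}_i$ for all $i\ge0$. ${}^tN$ denotes the transpose of $N$. *)

(* Defs.v *)
(* with mathcomp-analysis's [realType] and real-closed's
   [complex]: for R : realType, R[i] is the field of complex numbers. *)
From HB Require Import structures.
From mathcomp Require Import all_boot all_order all_algebra.
From mathcomp Require Import reals.
From mathcomp Require Import complex.
From mathcomp Require Import mpoly.
Set Implicit Arguments.
Unset Strict Implicit.
Unset Printing Implicit Defensive.
Import GRing.Theory Num.Theory.
Local Open Scope ring_scope.

(* The 8 affine coordinates of a pair of 2x2 matrices (A, B):
   k = 0..3 -> entries of A (row-major), k = 4..7 -> entries of B. *)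
Definition coords8 {F : nzRingType} (A B : 'M[F]_2) : 'I_8 -> F :=
  fun k => let j := (k %% 4)%N in
           let r : 'I_2 := inord (j %/ 2) in
           let c : 'I_2 := inord (j %% 2) in
           if (k < 4)%N then A r c else B r c.

(* Zariski open subsets of GL_2(F) x GL_2(F) (a principal open subset of
   F^8, viewed as a closed subvariety of F^8 x F given by det A det B t = 1):
   U is the complement, inside GL_2(F)^2, of the common zero locus of a
   finite family of polynomials in the 8 matrix entries. *)
Definition zariski_open_GL2sq {F : fieldType} (U : 'M[F]_2 -> 'M[F]_2 -> Prop) :=
  exists ps : seq {mpoly F[8]},
    forall A B : 'M[F]_2,
      U A B <-> [/\ A \in unitmx, B \in unitmx &
                    has (fun p => p.@[coords8 A B] != 0) ps].

Definition fib_GL2 {F : fieldType} (w : nat -> 'M[F]_2) :=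
  (forall i, w i \in unitmx) /\ (forall i, w i.+2 = w i.+1 *m w i).

Definition symmetric_mx {F : nzRingType} (A : 'M[F]_2) := A^T = A.

Definition ymx {F : nzRingType} (w : nat -> 'M[F]_2) (N : 'M[F]_2) (i : nat) :=
  if odd i then w i *m N^T else w i *m N.

Definition int_mx {F : nzRingType} (A : 'M[F]_2) :=
  exists Z : 'M[int]_2, A = map_mx (fun z : int => z%:~R) Z.

(* Main.v *)
Require Import Defs.
From HB Require Import structures.
From mathcomp Require Import all_boot all_order all_algebra.
From mathcomp Require Import reals complex mpoly ring.
Import GRing.Theory Num.Theory.
Local Open Scope ring_scope.

Definition mk2 {R : nzRingType} (a b c d : R) : 'M[R]_2 :=
  \matrix_(i < 2, j < 2) if val i == 0%N then (if val j == 0%N then a else b)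
                          else (if val j == 0%N then c else d).

Lemma ord2_01 (i : 'I_2) : i = 0 \/ i = 1.
Proof. case: i => [[|[|i]] Hi]; [left|right|by []]; exact: val_inj. Qed.

Lemma sym2 {R : nzRingType} (M : 'M[R]_2) : M 0 1 = M 1 0 -> symmetric_mx M.
Proof.
move=> H; apply/matrixP=> i j; rewrite mxE.
by case: (ord2_01 i) => ->; case: (ord2_01 j) => ->.
Qed.

Lemma map_mk2 {R S : nzRingType} (f : {rmorphism R -> S}) a b c d :
  map_mx f (mk2 a b c d) = mk2 (f a) (f b) (f c) (f d).
Proof. by apply/matrixP=> i j; rewrite !mxE; case: ifP; case: ifP. Qed.

Lemma sum2 {R : nzRingType} (F : 'I_2 -> R) : \sum_(i < 2) F i = F 0 + F 1.
Proof.
rewrite !(big_ord_recr, big_ord0) /= add0r; congr (F _ + F _); exact: val_inj.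
Qed.

Definition det3 {R : comNzRingType} (a b c d e f g h k : R) : R :=
  a * (e * k - f * h) - b * (d * k - f * g) + c * (d * h - e * g).

Lemma rmorph_det3 {R S : comNzRingType} (f : {rmorphism R -> S}) a b c d e g h k l :
  f (det3 a b c d e g h k l) = det3 (f a) (f b) (f c) (f d) (f e) (f g) (f h) (f k) (f l).
Proof. by rewrite /det3 !(rmorphB, rmorphD, rmorphM). Qed.

Definition Nmx3 {R : comNzRingType} (A B C : 'M[R]_2) : 'M[R]_2 :=
  let x0 := - A 1 0 in let x1 := A 0 0 in let x2 := - A 1 1 in let x3 := A 0 1 in
  let y0 := - B 1 0 in let y1 := - B 1 1 in let y2 := B 0 0 in let y3 := B 0 1 in
  let z0 := - C 1 0 in let z1 := C 0 0 in let z2 := - C 1 1 in let z3 := C 0 1 in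
  mk2 (det3 x1 x2 x3 y1 y2 y3 z1 z2 z3) (- det3 x0 x2 x3 y0 y2 y3 z0 z2 z3)
      (det3 x0 x1 x3 y0 y1 y3 z0 z1 z3) (- det3 x0 x1 x2 y0 y1 y2 z0 z1 z2).

Definition Nmx {R : comNzRingType} (A B : 'M[R]_2) := Nmx3 A B (B *m A).

Lemma map_Nmx {R S : comNzRingType} (f : {rmorphism R -> S}) A B :
  map_mx f (Nmx A B) = Nmx (map_mx f A) (map_mx f B).
Proof.
rewrite /Nmx /Nmx3 -map_mxM map_mk2 !rmorphN !rmorph_det3 !rmorphN.
by rewrite !mxE.
Qed.

Lemma Nmx_sym {R : comNzRingType} (A B : 'M[R]_2) :
  [/\ symmetric_mx (A *m Nmx A B), symmetric_mx (B *m (Nmx A B)^T) &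
      symmetric_mx (B *m A *m Nmx A B)].
Proof.
split; apply: sym2; rewrite /Nmx /Nmx3 /det3 !mxE !sum2 !mxE /=;
  rewrite ?sum2 ?mxE /=; ring.
Qed.

Lemma key3 {R : comNzRingType} (a b N1 : 'M[R]_2) :
  symmetric_mx (a *m N1) -> symmetric_mx (b *m N1^T) ->
  symmetric_mx (b *m a *m b *m N1^T).
Proof.
rewrite /symmetric_mx !trmx_mul !trmxK => ha hb.
rewrite !mulmxA hb.

rewrite -(mulmxA b N1^T) ha !mulmxA -(mulmxA (b *m a) N1) hb mulmxA.
by [].
Qed.

Lemma part4 {F : fieldType} (w : nat -> 'M[F]_2) N :
  (forall i, w i.+2 = w i.+1 *m w i) ->
  symmetric_mx (w 0%N *m N) -> symmetric_mx (w 1%N *m N^T) ->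
  symmetric_mx (w 1%N *m w 0%N *m N) ->
  forall k, symmetric_mx (ymx w N k).
Proof.
move=> wS h0 h1 h2.
have step k : symmetric_mx (ymx w N k) -> symmetric_mx (ymx w N k.+1) ->
              symmetric_mx (ymx w N k.+3).
  rewrite /ymx /= !wS !negbK.
  case: (odd k) => /= ha hb.
    by rewrite -[N in w k.+1 *m N]trmxK in hb; have := key3 _ _ _ ha hb; rewrite trmxK.
  by have := key3 _ _ _ ha hb.
have all3 k : [/\ symmetric_mx (ymx w N k), symmetric_mx (ymx w N k.+1) &
                 symmetric_mx (ymx w N k.+2)].
  elim: k => [|k [p0 p1 p2]]; last by split => //; apply: step.
  by split; rewrite /ymx //= wS.
by move=> k; case: (all3 k).
Qed.

Definition AX {F : fieldType} : 'M[{mpoly F[8]}]_2 :=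
  \matrix_(i < 2, j < 2) 'X_(inord (2 * i + j)).
Definition BX {F : fieldType} : 'M[{mpoly F[8]}]_2 :=
  \matrix_(i < 2, j < 2) 'X_(inord (4 + 2 * i + j)).
Definition pdet (F : fieldType) : {mpoly F[8]} := \det (Nmx AX BX).

Lemma pdet_eval {F : fieldType} (A B : 'M[F]_2) :
  (pdet F).@[coords8 A B] = \det (Nmx A B).
Proof.
rewrite /pdet -det_map_mx map_Nmx.
have -> : map_mx (meval (coords8 A B)) AX = A.
  apply/matrixP=> i j; rewrite !mxE mevalXU /coords8.
  by case: (ord2_01 i) => ->; case: (ord2_01 j) => ->;
    rewrite inordK //=; congr (A _ _); apply/val_inj; rewrite /= inordK.
have -> // : map_mx (meval (coords8 A B)) BX = B.
  apply/matrixP=> i j; rewrite !mxE mevalXU /coords8.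
  by case: (ord2_01 i) => ->; case: (ord2_01 j) => ->;
    rewrite inordK //=; congr (B _ _); apply/val_inj; rewrite /= inordK.
Qed.

Lemma mul_mk2 {R : nzRingType} (a b c d e f g h : R) :
  mk2 a b c d *m mk2 e f g h = mk2 (a*e+b*g) (a*f+b*h) (c*e+d*g) (c*f+d*h).
Proof.
apply/matrixP=> i j; rewrite !mxE sum2 !mxE.
by case: (ord2_01 i) => ->; case: (ord2_01 j) => ->.
Qed.

Lemma one_mk2 {R : nzRingType} : 1%:M = mk2 (1 : R) 0 0 1.
Proof.
apply/matrixP=> i j; rewrite !mxE.
by case: (ord2_01 i) => ->; case: (ord2_01 j) => ->.
Qed.

Lemma unit_mk2 {R : comUnitRingType} (a b c d e f g h : R) :
  mk2 a b c d *m mk2 e f g h = 1%:M -> mk2 e f g h *m mk2 a b c d = 1%:M ->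
  mk2 a b c d \in unitmx.
Proof. by move=> h1 h2; apply: (@intro_unitmx _ _ _ (mk2 e f g h)). Qed.

Theorem proposition3p1 (R : realType) :
  exists U : 'M[R[i]]_2 -> 'M[R[i]]_2 -> Prop,
    [/\ zariski_open_GL2sq U,
        (exists A B, U A B),
        (forall w : nat -> 'M[R[i]]_2, fib_GL2 w -> U (w 0%N) (w 1%N) ->
           exists N : 'M[R[i]]_2, N \in unitmx /\
             forall k, symmetric_mx (ymx w N k)),
        (forall (w : nat -> 'M[R[i]]_2) (N : 'M[R[i]]_2), fib_GL2 w ->
           N \in unitmx ->
           symmetric_mx (w 0%N *m N) ->
           symmetric_mx (w 1%N *m N^T) ->
           symmetric_mx (w 1%N *m w 0%N *m N) ->
           forall k, symmetric_mx (ymx w N k)) &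
        (forall w : nat -> 'M[R[i]]_2, fib_GL2 w -> U (w 0%N) (w 1%N) ->
           int_mx (w 0%N) -> int_mx (w 1%N) ->
           exists N : 'M[R[i]]_2, [/\ N \in unitmx, int_mx N &
             forall k, symmetric_mx (ymx w N k)])].
Proof.
pose U (A B : 'M[R[i]]_2) := [/\ A \in unitmx, B \in unitmx &
   has (fun p => p.@[coords8 A B] != 0) [:: pdet R[i]]].
have UN A B : U A B -> Nmx A B \in unitmx.
  by case=> _ _; rewrite /= orbF pdet_eval unitmxE unitfE.
have symN (w : nat -> 'M[R[i]]_2) : fib_GL2 w ->
    forall k, symmetric_mx (ymx w (Nmx (w 0%N) (w 1%N)) k).
  case=> _ wS; have [h0 h1 h2] := Nmx_sym (w 0%N) (w 1%N).
  exact: part4.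
exists U; split.
- by exists [:: pdet R[i]].
- exists (mk2 0 1 1 0), (mk2 0 1 1 1); split.
  + by apply: (@unit_mk2 _ _ _ _ _ 0 1 1 0); rewrite mul_mk2 one_mk2; congr mk2; ring.
  + by apply: (@unit_mk2 _ _ _ _ _ (-1) 1 1 0); rewrite mul_mk2 one_mk2; congr mk2; ring.
  + rewrite /= orbF pdet_eval -unitfE -unitmxE.
    have -> : Nmx (mk2 0 1 1 0) (mk2 0 1 1 1) = mk2 (1 : R[i]) 0 (-1) 1.
      rewrite /Nmx mul_mk2 /Nmx3 /det3 !mxE /=; congr mk2; ring.
    by apply: (@unit_mk2 _ _ _ _ _ 1 0 1 1); rewrite mul_mk2 one_mk2; congr mk2; ring.
- move=> w fw Uw; exists (Nmx (w 0%N) (w 1%N)); split; [exact: UN | exact: symN].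
- by move=> w N [_ wS] _; apply: part4.
- move=> w fw Uw [Z0 E0] [Z1 E1]; exists (Nmx (w 0%N) (w 1%N)); split.
  + exact: UN.
  + exists (Nmx Z0 Z1); rewrite E0 E1; symmetry; exact: (map_Nmx intr).
  + exact: symN.
Qed.
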